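(* Let $A_1,\dots,A_m\in\mathbb{R}^{n\times n}$ be real symmetric matrices and fix $t\ge1$. The map sending an ordered orthogonal simultaneous block decomposition $(V_1,\dots,V_t)$ of $A_1,\dots,A_m$ to $(\epsilon_1,\dots,\epsilon_t)$, where $\epsilon_j$ is the orthogonal projection of $\mathbb{R}^n$ onto $V_j$, is a bijection onto the set of ordered complete sets of $t$ orthogonal idempotents $(\epsilon_1,\dots,\epsilon_t)$ of $Z(A_1,\dots,A_m)$ in which every $\epsilon_j$ is symmetric ($\epsilon_j^T=\epsilon_j$). In particular, there exist an orthogonal matrix $Q\in\mathrm{O}_n(\mathbb{R})$ and positive integers $n_1,\dots,n_t$ with $\sum_j n_j=n$ such that every $Q^TA_iQ$ is block diagonal with diagonal blocks of sizes $n_1,\dots,n_t$ if and only if $Z(A_1,\dots,A_m)$ contains a complete set of $t$ orthogonal idempotents all of which are symmetric matrices.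
   Context: The center is $Z(A_1,\dots,A_m)=\{X\in\mathbb{R}^{n\times n} : (A_iX)^T=A_iX \text{ for all } i\}$. An ordered orthogonal simultaneous block decomposition of length $t$ of $A_1,\dots,A_m$ is a $t$-tuple $(V_1,\dots,V_t)$ of nonzero subspaces of $\mathbb{R}^n$, pairwise orthogonal with respect to the standard inner product, with $\mathbb{R}^n=V_1\oplus\cdots\oplus V_t$ and $x^TA_iy=0$ for all $i$, all $j\neq l$, $x\in V_j$, $y\in V_l$. An ordered complete set of $t$ orthogonal idempotents of $Z(A_1,\dots,A_m)$ is a $t$-tuple of nonzero matrices $\epsilon_1,\dots,\epsilon_t\in Z(A_1,\dots,A_m)$ with $\epsilon_j^2=\epsilon_j$, $\epsilon_j\epsilon_l=0$ for $j\neq l$, and $\sum_j\epsilon_j=I_n$. *)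

(* Defs.v *)
From HB Require Import structures.
From mathcomp Require Import all_boot all_order all_algebra.
From mathcomp Require Import reals.
From Stdlib Require Import ClassicalEpsilon.
Set Implicit Arguments. Unset Strict Implicit. Unset Printing Implicit Defensive.
Import Order.TTheory GRing.Theory Num.Theory.
Local Open Scope ring_scope.

Section Defs.
Variables (R : realType) (n m t : nat).

Definition dotv (x y : 'cV[R]_n) : R := (x^T *m y) 0 0.

Definition bform (A : 'M[R]_n) (x y : 'cV[R]_n) : R := (x^T *m A *m y) 0 0.

(* the center  Z(A_1,...,A_m) = { X | (A_i X)^T = A_i X for all i } *)
Definition in_center (A : 'I_m -> 'M[R]_n) (X : 'M[R]_n) : Prop :=
  forall i, (A i *m X)^T = A i *m X.

Definition is_orthproj (V : {vspace 'cV[R]_n}) (P : 'M[R]_n) : Prop :=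
  (forall x : 'cV[R]_n, P *m x \in V) /\
  (forall x v : 'cV[R]_n, v \in V -> dotv (x - P *m x) v = 0).

(* the orthogonal projection onto V (it exists and is unique) *)
Definition orthproj (V : {vspace 'cV[R]_n}) : 'M[R]_n :=
  epsilon (inhabits 0) (is_orthproj V).

Definition is_oosbd (A : 'I_m -> 'M[R]_n) (Vs : {ffun 'I_t -> {vspace 'cV[R]_n}}) : Prop :=
  [/\ (forall j, Vs j != 0%VS),
      (forall j l, j != l -> forall x y, x \in Vs j -> y \in Vs l -> dotv x y = 0),
      (\sum_(j < t) Vs j)%VS = fullv,
      directv (\sum_(j < t) Vs j)
    & (forall i j l, j != l -> forall x y, x \in Vs j -> y \in Vs l -> bform (A i) x y = 0)].

Definition is_ocsoi (A : 'I_m -> 'M[R]_n) (eps : {ffun 'I_t -> 'M[R]_n}) : Prop :=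
  [/\ (forall j, eps j != 0),
      (forall j, in_center A (eps j)),
      (forall j, eps j *m eps j = eps j),
      (forall j l, j != l -> eps j *m eps l = 0)
    & \sum_(j < t) eps j = 1%:M].

Definition proj_tuple (Vs : {ffun 'I_t -> {vspace 'cV[R]_n}}) : {ffun 'I_t -> 'M[R]_n} :=
  [ffun j => orthproj (Vs j)].

Definition in_block (ns : 'I_t -> nat) (j : 'I_t) (r : nat) : Prop :=
  (\sum_(k < t | (k < j)%N) ns k <= r < \sum_(k < t | (k < j)%N) ns k + ns j)%N.

Definition block_diag (ns : 'I_t -> nat) (M : 'M[R]_n) : Prop :=
  forall r c : 'I_n, M r c != 0 -> exists j, in_block ns j r /\ in_block ns j c.

End Defs.

(* Main.v *)
Require Import Defs.
From HB Require Import structures.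
From mathcomp Require Import all_boot all_order all_algebra.
From mathcomp Require Import reals.
From mathcomp Require Import zify.
From Stdlib Require Import ClassicalEpsilon.
Set Implicit Arguments. Unset Strict Implicit. Unset Printing Implicit Defensive.
Import Order.TTheory GRing.Theory Num.Theory.
Local Open Scope ring_scope.

Section Basics.
Variables (R : realType) (n : nat).
Implicit Types (M N P : 'M[R]_n) (x y v w : 'cV[R]_n).

Lemma mx_ext M N : (forall x, M *m x = N *m x) -> M = N.
Proof.
move=> H; apply/matrixP => i j.
have := congr1 (fun X : 'cV[R]_n => X i 0) (H (delta_mx j 0)).
by rewrite -!colE !mxE.
Qed.

Lemma form_ext M N : (forall x y, (x^T *m M *m y) 0 0 = (x^T *m N *m y) 0 0) -> M = N.
Proof.
move=> H; apply/matrixP => i j.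
have := H (delta_mx i 0) (delta_mx j 0).
by rewrite trmx_delta -!rowE -!colE !mxE.
Qed.

Lemma dotvC x y : dotv x y = dotv y x.
Proof.
rewrite /dotv; have -> : x^T *m y = (y^T *m x)^T by rewrite trmx_mul trmxK.
by rewrite mxE.
Qed.

Lemma dotv_self_eq0 x : dotv x x = 0 -> x = 0.
Proof.
rewrite /dotv mxE => H; apply/matrixP => i j; rewrite ord1 mxE.
have H0 : forall k : 'I_n, 0 <= x^T 0 k * x k 0 by move=> k; rewrite mxE -expr2 sqr_ge0.
have := psumr_eq0P (fun k _ => H0 k) H (i := i) isT.
by rewrite mxE -expr2 => /eqP; rewrite sqrf_eq0 => /eqP.
Qed.


Lemma span_proj (s : seq 'cV[R]_n) : exists P : 'M[R]_n,
  [/\ P^T = P, P *m P = P & forall x, (x \in <<s>>%VS) = (P *m x == x)].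
Proof.
elim: s => [|v s [P [PT PP Pfix]]].
  exists 0; split; first by rewrite trmx0.
    by rewrite mul0mx.
  by move=> x; rewrite span_nil memv0 mul0mx eq_sym.
set w := v - P *m v.
have Pw : P *m w = 0 by rewrite mulmxBr mulmxA PP subrr.
have wP : w^T *m P = 0 by rewrite -PT -trmx_mul Pw trmx0.
have [w0|wn0] := eqVneq w 0.
  exists P; split => // x; rewrite span_cons.
  have vs : v \in <<s>>%VS by rewrite Pfix; apply/eqP/esym/subr0_eq.
  by move: vs; rewrite memvE => /addv_idPr ->; apply: Pfix.
set c := (w^T *m w) 0 0.
have c0 : c != 0 by apply: contra wn0 => /eqP /dotv_self_eq0 ->.
have wTw : w^T *m w = c%:M by rewrite [LHS]mx11_scalar.
set W := w *m w^T.
have hPW : P *m W = 0 by rewrite mulmxA Pw mul0mx.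
have hWP : W *m P = 0 by rewrite -mulmxA wP mulmx0.
have hWW : W *m W = c *: W.
  by rewrite /W mulmxA -(mulmxA w) wTw mul_mx_scalar -scalemxAl.
exists (P + c^-1 *: W); split.
- by rewrite linearD linearZ /= trmx_mul trmxK PT.
- rewrite mulmxDl !mulmxDr PP -!scalemxAr -!scalemxAl hPW hWP hWW.
  by rewrite !scaler0 !addr0 !scalerA add0r divfK.
move=> x; rewrite span_cons.
have Pz z : P *m z = z -> (P + c^-1 *: W) *m z = z.
  move=> Hz; have wz : w^T *m z = 0 by rewrite -Hz mulmxA wP mul0mx.
  by rewrite mulmxDl -scalemxAl /W -mulmxA wz mulmx0 scaler0 addr0.
have Pv : (P + c^-1 *: W) *m v = v.
  have wv : w^T *m v = c%:M.
    by rewrite -{1}(subrK (P *m v) v) -/w mulmxDr wTw mulmxA wP mul0mx addr0.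
  rewrite mulmxDl -scalemxAl /W -mulmxA wv mul_mx_scalar scalerA mulVf // scale1r.
  by rewrite /w addrC subrK.
apply/idP/eqP.
  case/memv_addP => y /vlineP [k ->] [z zs ->].
  rewrite mulmxDr -scalemxAr Pv Pz //; by apply/eqP; rewrite -Pfix.
move=> Hx; rewrite -Hx mulmxDl; apply: memvD.
  by apply: (subvP (addvSr _ _)); rewrite Pfix mulmxA PP.
have wU : w \in (<[v]> + <<s>>)%VS.
  apply: memvB; first by apply: (subvP (addvSl _ _)); apply: memv_line.
  by apply: (subvP (addvSr _ _)); rewrite Pfix mulmxA PP.
rewrite -scalemxAl /W -mulmxA [w^T *m x]mx11_scalar mul_mx_scalar.
by apply: memvZ; apply: memvZ.
Qed.


Lemma dotvBl x y v : dotv (x - y) v = dotv x v - dotv y v.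
Proof. by rewrite /dotv !mxE -sumrB; apply: eq_bigr => k _; rewrite !mxE mulrBl. Qed.

Lemma symidem_orthproj (V : {vspace 'cV[R]_n}) P : P^T = P -> P *m P = P ->
  (forall x, (x \in V) = (P *m x == x)) -> is_orthproj V P.
Proof.
move=> PT PP Pfix; split=> [x|x v]; first by rewrite Pfix mulmxA PP.
rewrite Pfix => /eqP Pv; rewrite /dotv -Pv linearB /= mulmxBl.
by rewrite trmx_mul PT !mulmxA -(mulmxA _ P P) PP subrr mxE.
Qed.

Lemma orthproj_uniq (V : {vspace 'cV[R]_n}) P P' :
  is_orthproj V P -> is_orthproj V P' -> P = P'.
Proof.
move=> [PV Pp] [P'V P'p]; apply: mx_ext => x; apply/eqP; rewrite -subr_eq0; apply/eqP.
apply: dotv_self_eq0.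
have dV : P *m x - P' *m x \in V by apply: memvB.
have e : P *m x - P' *m x = (x - P' *m x) - (x - P *m x).
  by rewrite [RHS]addrC opprB addrA subrK.
by rewrite {1}e dotvBl P'p ?Pp ?subrr.
Qed.

Lemma orthprojE (V : {vspace 'cV[R]_n}) P : P^T = P -> P *m P = P ->
  (forall x, (x \in V) = (P *m x == x)) -> orthproj V = P.
Proof.
move=> PT PP Pfix; have H := symidem_orthproj PT PP Pfix.
have H' := epsilon_spec (inhabits 0) (is_orthproj V) (ex_intro _ P H).
exact: orthproj_uniq H' H.
Qed.

Lemma orthproj_props (V : {vspace 'cV[R]_n}) :
  [/\ (orthproj V)^T = orthproj V, orthproj V *m orthproj V = orthproj V
    & forall x, (x \in V) = (orthproj V *m x == x)].
Proof.
have [P [PT PP Pfix]] := span_proj (vbasis V).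
rewrite (span_basis (vbasisP V)) in Pfix.
by rewrite (orthprojE PT PP Pfix).
Qed.

End Basics.

Section Part1.
Variables (R : realType) (n m t : nat) (A : 'I_m -> 'M[R]_n).
Hypothesis symA : forall i, (A i)^T = A i.
Implicit Types (M N P : 'M[R]_n) (x y v w : 'cV[R]_n).

Lemma bformC (M : 'M[R]_n) x y : M^T = M ->
  (x^T *m M *m y) 0 0 = (y^T *m M *m x) 0 0.
Proof.
move=> MT; have -> : x^T *m M *m y = (y^T *m M *m x)^T.
  by rewrite !trmx_mul MT trmxK mulmxA.
by rewrite mxE.
Qed.

Lemma bform_sumr (M : 'M[R]_n) x (I : finType) (y : I -> 'cV[R]_n) :
  (x^T *m M *m \sum_l y l) 0 0 = \sum_l (x^T *m M *m y l) 0 0.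
Proof. by rewrite mulmx_sumr summxE. Qed.

Variable Vs : {ffun 'I_t -> {vspace 'cV[R]_n}}.
Hypothesis HV : is_oosbd A Vs.
Local Notation P j := (orthproj (Vs j)).

Lemma P_cross j l y : j != l -> y \in Vs l -> P j *m y = 0.
Proof.
move=> jl yl; have [PT PP Pfix] := orthproj_props (Vs j).
apply: dotv_self_eq0; case: HV => _ orth _ _ _.
have -> : dotv (P j *m y) (P j *m y) = dotv y (P j *m y).
  by rewrite /dotv trmx_mul PT -mulmxA (mulmxA (P j)) PP.
by apply: (orth l j) => //; [rewrite eq_sym | rewrite Pfix mulmxA PP].
Qed.

Lemma P_sum x : \sum_j P j *m x = x.
Proof.
case: HV => _ _ full _ _.
have : x \in (\sum_(j < t) Vs j)%VS by rewrite full memvf.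
case/memv_sumP => vs vsV ->.
have Pj j : P j *m \sum_(l < t) vs l = vs j.
  rewrite mulmx_sumr (bigD1 j) //= big1 ?addr0.
    by have [_ _ Pfix] := orthproj_props (Vs j); apply/eqP; rewrite -Pfix vsV.
  by move=> l lj; apply: P_cross; [rewrite eq_sym | apply: vsV].
by apply: eq_bigr => j _; rewrite Pj.
Qed.


Lemma P_form i j x y :
  (x^T *m A i *m (P j *m y)) 0 0 = ((P j *m x)^T *m A i *m (P j *m y)) 0 0.
Proof.
rewrite bformC // -{1}(P_sum x) bform_sumr (bigD1 j) //= big1 ?addr0.
  by rewrite bformC.
move=> l lj; rewrite bformC //; case: HV => _ _ _ _ bf.
have [_ _ Pfixj] := orthproj_props (Vs j).
have [_ _ Pfixl] := orthproj_props (Vs l).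
apply: (bf i l j) => //.
  by rewrite Pfixl mulmxA; have [_ -> _] := orthproj_props (Vs l).
by rewrite Pfixj mulmxA; have [_ -> _] := orthproj_props (Vs j).
Qed.


Lemma part1_wd : is_ocsoi A (proj_tuple Vs) /\ (forall j, (proj_tuple Vs j)^T = proj_tuple Vs j).
Proof.
split; last by move=> j; rewrite ffunE; have [-> _ _] := orthproj_props (Vs j).
split.
- move=> j; rewrite ffunE; case: HV => nz _ _ _ _.
  have [_ _ Pfix] := orthproj_props (Vs j).
  have := memv_pick (Vs j); rewrite Pfix; apply: contraTneq => ->.
  by rewrite mul0mx eq_sym vpick0 (negbTE (nz j)).
- move=> j i; rewrite ffunE; apply: form_ext => x y.
  have [PT PP _] := orthproj_props (Vs j).
  rewrite trmx_mul symA PT.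
  have e1 : x^T *m (orthproj (Vs j) *m A i) *m y = (orthproj (Vs j) *m x)^T *m A i *m y.
    by rewrite trmx_mul PT mulmxA.
  have e2 : x^T *m (A i *m orthproj (Vs j)) *m y = x^T *m A i *m (orthproj (Vs j) *m y).
    by rewrite !mulmxA.
  rewrite e1 e2 P_form bformC ?symA // P_form bformC ?symA //.
- by move=> j; rewrite ffunE; have [_ -> _] := orthproj_props (Vs j).
- move=> j l jl; rewrite !ffunE; apply: mx_ext => x.
  rewrite -mulmxA (@P_cross j l) ?mul0mx //.
  by have [_ _ ->] := orthproj_props (Vs l); rewrite mulmxA; have [_ -> _] := orthproj_props (Vs l).
- apply: mx_ext => x; rewrite mul1mx mulmx_suml -{2}(P_sum x).
  by apply: eq_bigr => j _; rewrite ffunE.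
Qed.

End Part1.

Section Part1b.
Variables (R : realType) (n m t : nat) (A : 'I_m -> 'M[R]_n).
Hypothesis symA : forall i, (A i)^T = A i.

Lemma part1_inj (Vs Ws : {ffun 'I_t -> {vspace 'cV[R]_n}}) :
  proj_tuple Vs = proj_tuple Ws -> Vs = Ws.
Proof.
move=> e; apply/ffunP => j; apply/vspaceP => x.
have := congr1 (fun f : {ffun _ -> _} => f j) e; rewrite !ffunE => ej.
have [_ _ ->] := orthproj_props (Vs j).
by have [_ _ ->] := orthproj_props (Ws j); rewrite ej.
Qed.

Definition imv (E : 'M[R]_n) : {vspace 'cV[R]_n} := limg (linfun (mulmx E)).

Lemma imvE (E : 'M[R]_n) : E *m E = E ->
  forall x, (x \in imv E) = (E *m x == x).
Proof.
move=> EE x; apply/memv_imgP/eqP => [[y _ ->]|<-].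
  by rewrite lfunE /= mulmxA EE.
by exists x; rewrite ?memvf // lfunE.
Qed.

Lemma part1_surj (eps : {ffun 'I_t -> 'M[R]_n}) : is_ocsoi A eps ->
  (forall j, (eps j)^T = eps j) ->
  exists Vs : {ffun 'I_t -> {vspace 'cV[R]_n}}, is_oosbd A Vs /\ proj_tuple Vs = eps.
Proof.
case=> nz cen idem orth sum1 sym.
pose Vs := [ffun j => imv (eps j)].
have fixE j x : (x \in Vs j) = (eps j *m x == x) by rewrite ffunE imvE.
have EA i j : eps j *m A i = A i *m eps j.
  by rewrite -[RHS](cen j i) trmx_mul sym symA.
exists Vs; split; last first.
  apply/ffunP => j; rewrite !ffunE; apply: orthprojE => // x.
  by rewrite imvE.
split.
- move=> j; apply/negP => /eqP V0; apply: (negP (nz j)); apply/eqP/mx_ext => x.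
  have : eps j *m x \in Vs j by rewrite fixE mulmxA idem.
  by rewrite V0 memv0 mul0mx => /eqP.
- move=> j l jl x y; rewrite !fixE => /eqP <- /eqP <-.
  by rewrite /dotv trmx_mul sym -mulmxA (mulmxA (eps j)) orth // mul0mx mulmx0 mxE.
- apply/vspaceP => x; rewrite memvf; apply/memv_sumP.
  exists (fun j => eps j *m x) => [j _|]; first by rewrite fixE mulmxA idem.
  by rewrite -mulmx_suml sum1 mul1mx.
- apply/directv_sum_independent => us Hus Hsum j _.
  have : eps j *m \sum_(l < t) us l = us j.
    rewrite mulmx_sumr (bigD1 j) //= big1 ?addr0.
      by apply/eqP; rewrite -fixE Hus.
    move=> l lj; have /eqP <- : eps l *m us l == us l by rewrite -fixE Hus.
    by rewrite mulmxA orth ?mul0mx // eq_sym.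
  by rewrite Hsum mulmx0.
- move=> i j l jl x y; rewrite !fixE => /eqP <- /eqP <-.
  rewrite /bform trmx_mul sym -!mulmxA (mulmxA (A i)) -EA (mulmxA (eps j)).
  by rewrite (mulmxA (eps j)) orth // !mul0mx mulmx0 mxE.
Qed.

End Part1b.

Section Decomp.
Variables (R : realType) (n : nat).

Lemma trZ p q (a : R) (M : 'M[R]_(p, q)) : (a *: M)^T = a *: M^T.
Proof. exact: linearZ. Qed.
Lemma trD p q (M N : 'M[R]_(p, q)) : (M + N)^T = M^T + N^T.
Proof. exact: linearD. Qed.
Lemma trB p q (M N : 'M[R]_(p, q)) : (M - N)^T = M^T - N^T.
Proof. exact: linearB. Qed.

Lemma nz_col (E : 'M[R]_n) : E != 0 -> exists i : 'I_n, E *m (delta_mx i 0 : 'cV[R]_n) != 0.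
Proof.
move=> En0; apply/existsP; apply: contraR En0; rewrite negb_exists => /forallP H.
apply/eqP/matrixP => a b; have := H b; rewrite negbK -colE => /eqP /colP /(_ a).
by rewrite !mxE.
Qed.

Lemma symidem_decomp (E : 'M[R]_n) : E^T = E -> E *m E = E ->
  exists r, exists B : 'M[R]_(r, n), B *m B^T = 1%:M /\ B^T *m B = E.
Proof.
move: {2}(\rank E) (leqnn (\rank E)) => k; elim: k E => [|k IH] E rk ET EE.
  have E0 : E = 0 by apply/eqP; rewrite -mxrank_eq0 -leqn0.
  exists 0%N, 0; split; first by apply/matrixP => [[]].
  by rewrite E0 trmx0 mul0mx.
have [->|En0] := eqVneq E 0.
  exists 0%N, 0; split; first by apply/matrixP => [[]].
  by rewrite trmx0 mul0mx.
have [i vn0] := nz_col En0; set v := E *m delta_mx i 0 in vn0.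
have Ev : E *m v = v by rewrite mulmxA EE.
set c := (v^T *m v) 0 0.
have c0 : c != 0 by apply: contra vn0 => /eqP /dotv_self_eq0 ->.
have cge0 : 0 <= c.
  rewrite /c mxE; apply: sumr_ge0 => a _; rewrite mxE -expr2; exact: sqr_ge0.
have cgt0 : 0 < c by rewrite lt_def c0.
set s := Num.sqrt c.
have sgt0 : 0 < s by rewrite sqrtr_gt0.
have s0 : s != 0 by rewrite gt_eqF.
set u := s^-1 *: v.
have uTu : u^T *m u = 1%:M.
  rewrite /u trZ -scalemxAl -scalemxAr [v^T *m v]mx11_scalar -/c scalerA.
  by rewrite -scalemx1 scalerA -expr2 exprVn sqr_sqrtr // mulVf // scale1r.
have Eu : E *m u = u by rewrite /u -scalemxAr Ev.
have uE : u^T *m E = u^T by rewrite -{1}ET -trmx_mul Eu.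
have un0 : u != 0 by apply/eqP => u0; move: uTu; rewrite u0 trmx0 mul0mx => /matrixP/(_ 0 0)/eqP; rewrite !mxE eqxx /= eq_sym oner_eq0.
set E' := E - u *m u^T.
have E'T : E'^T = E' by rewrite /E' trB trmx_mul trmxK ET.
have E'u : E' *m u = 0 by rewrite /E' mulmxBl Eu -mulmxA uTu mulmx1 subrr.
have E'E : E' *m E = E' by rewrite /E' mulmxBl EE -mulmxA uE.
have E'E' : E' *m E' = E'.
  by rewrite {2}/E' mulmxBr E'E mulmxA E'u mul0mx subr0.
have rk' : (\rank E' <= k)%N.
  rewrite -ltnS; apply: leq_trans rk; apply: rank_ltmx; rewrite ltmxE.
  rewrite -{1}E'E submxMl /=; apply/submxP => [[D eD]].
  by move: un0; rewrite -Eu eD -mulmxA E'u mulmx0 eqxx.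
have [r [B' [B'B' B'TB']]] := IH E' rk' E'T E'E'.
have B'u : B' *m u = 0.
  have -> : B' = B' *m E' by rewrite -B'TB' mulmxA B'B' mul1mx.
  by rewrite -mulmxA E'u mulmx0.
exists (1 + r)%N, (col_mx u^T B'); split.
  rewrite tr_col_mx trmxK mul_col_row uTu B'u B'B' -(trmxK u) -trmx_mul trmxK B'u trmx0.
  by rewrite -scalar_mx_block.
by rewrite tr_col_mx trmxK mul_row_col B'TB' /E' addrC subrK.
Qed.
End Decomp.

Local Close Scope ring_scope.
Section Blocks.
Variables (R : realType) (n t : nat) (ns : 'I_t -> nat).
Hypothesis Hs : (\sum_(j < t) ns j)%N = n.

Definition bcast (r : 'I_n) : 'I_(\sum_(j < t) ns j) := cast_ord (esym Hs) r.
Definition blk (r : 'I_n) : 'I_t := tagnat.sig1 (bcast r).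

Lemma bcast_inj : injective bcast.
Proof. exact: cast_ord_inj. Qed.

Lemma valE (s : 'I_(\sum_(j < t) ns j)) :
  (s : nat) = (\sum_(i < t | (i < tagnat.sig1 s)%N) ns i + tagnat.sig2 s)%N.
Proof.
by rewrite -[in LHS](tagnat.sigK s) tagnat.rankEsum.
Qed.

Lemma in_block_blk (r : 'I_n) : in_block ns (blk r) r.
Proof.
rewrite /in_block /blk; have -> : (r : nat) = bcast r by [].
rewrite valE leq_addr /= ltn_add2l; exact: ltn_ord.
Qed.

Lemma in_block_lt (j l : 'I_t) : (j < l)%N ->
  (\sum_(k < t | (k < j)%N) ns k + ns j <= \sum_(k < t | (k < l)%N) ns k)%N.
Proof.
move=> jl; rewrite [X in (_ <= X)%N](bigD1 j) //= [X in (X <= _)%N]addnC leq_add2l.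
rewrite big_mkcond [X in (_ <= X)%N]big_mkcond /=; apply: leq_sum => k _.
case: ifP => // kj; rewrite (ltn_trans kj jl) /=.
by case: eqP => // e; move: kj; rewrite e ltnn.
Qed.

Lemma in_block_uniq (j l : 'I_t) (r : nat) :
  in_block ns j r -> in_block ns l r -> j = l.
Proof.
rewrite /in_block => /andP [j1 j2] /andP [l1 l2].
case: (ltngtP j l) => [jl|lj|/val_inj //].
  by have := in_block_lt jl; move: j2 l1; clear; lia.
by have := in_block_lt lj; move: l2 j1; clear; lia.
Qed.

Lemma blkP (j : 'I_t) (r : 'I_n) : in_block ns j r <-> blk r = j.
Proof.
split=> [H|<-]; last exact: in_block_blk.
exact: in_block_uniq (in_block_blk r) H.
Qed.

Lemma blk_surj (j : 'I_t) : (0 < ns j)%N -> exists r, blk r = j.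
Proof.
move=> nj; exists (cast_ord Hs (@tagnat.Rank _ ns j (Ordinal nj))).
by rewrite /blk /bcast cast_ordK tagnat.Rank1K.
Qed.

End Blocks.

Local Open Scope ring_scope.

Section Fwd.
Variables (R : realType) (n m t : nat) (A : 'I_m -> 'M[R]_n).
Hypothesis symA : forall i, (A i)^T = A i.
Variables (Q : 'M[R]_n) (ns : 'I_t -> nat).
Hypotheses (QQ : Q^T *m Q = 1%:M) (nspos : forall j, (0 < ns j)%N)
  (Hs : (\sum_(j < t) ns j)%N = n)
  (bd : forall i, block_diag ns (Q^T *m A i *m Q)).

Let d (j : 'I_t) : 'rV[R]_n := \row_r ((blk Hs r == j)%:R).
Let D j := diag_mx (d j).

Lemma DD j : D j *m D j = D j.
Proof.
rewrite /D mulmx_diag; congr diag_mx; apply/rowP => r; rewrite !mxE.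
by case: eqP; rewrite ?mulr1 ?mulr0.
Qed.

Lemma Dorth j l : j != l -> D j *m D l = 0.
Proof.
move=> jl; rewrite /D mulmx_diag; apply/matrixP => r c; rewrite !mxE.
case: (eqVneq (blk Hs r) j) => [e|]; last by rewrite mul0r mul0rn.
by rewrite e (negbTE jl) mulr0 mul0rn.
Qed.

Lemma Dsum : \sum_j D j = 1%:M.
Proof.
apply/matrixP => r c; rewrite summxE !mxE (bigD1 (blk Hs r)) //= big1 ?addr0.
  by rewrite !mxE eqxx.
by move=> j jr; rewrite !mxE eq_sym (negbTE jr) mul0rn.
Qed.

Lemma Dnz j : D j != 0.
Proof.
have [r rj] := blk_surj Hs (nspos j).
apply/eqP => /matrixP /(_ r r); rewrite !mxE rj !eqxx mulr1n => /eqP.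
by rewrite oner_eq0.
Qed.

Lemma Dcomm i j : (Q^T *m A i *m Q) *m D j = D j *m (Q^T *m A i *m Q).
Proof.
have := bd (i := i); set M := Q^T *m A i *m Q => bdi.
rewrite /D mul_mx_diag mul_diag_mx; apply/matrixP => r c; rewrite [LHS]mxE [RHS]mxE.
have [->|nz] := eqVneq (M r c) 0; first by rewrite mulr0 mul0r.
have [k [kr kc]] := bdi r c nz; rewrite !mxE.
by rewrite (proj1 (blkP Hs k r) kr) (proj1 (blkP Hs k c) kc) mulrC.
Qed.


Lemma part2_fwd : exists eps : {ffun 'I_t -> 'M[R]_n},
  is_ocsoi A eps /\ (forall j, (eps j)^T = eps j).
Proof.
have QQt : Q *m Q^T = 1%:M by apply: mulmx1C.
have conj X Y : (Q *m X *m Q^T) *m (Q *m Y *m Q^T) = Q *m (X *m Y) *m Q^T.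
  by rewrite !mulmxA -(mulmxA _ Q^T Q) QQ mulmx1.
exists [ffun j => Q *m D j *m Q^T]; split; last first.
  by move=> j; rewrite ffunE !trmx_mul trmxK /D tr_diag_mx mulmxA.
split.
- move=> j; rewrite ffunE; apply: contraNneq (Dnz j) => e.
  have back : Q^T *m (Q *m D j *m Q^T) *m Q = D j.
    by rewrite !mulmxA QQ mul1mx -mulmxA QQ mulmx1.
  by rewrite -back e mulmx0 mul0mx.
- move=> j i; rewrite ffunE.
  have AE : A i = Q *m (Q^T *m A i *m Q) *m Q^T.
    by rewrite !mulmxA QQt mul1mx -mulmxA QQt mulmx1.
  rewrite !trmx_mul trmxK symA /D tr_diag_mx -/(D j).
  have L : Q *m (D j *m Q^T) *m A i = Q *m (D j *m (Q^T *m A i *m Q)) *m Q^T.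
    by rewrite !mulmxA -(mulmxA _ Q Q^T) QQt mulmx1.
  have Rr : A i *m (Q *m D j *m Q^T) = Q *m ((Q^T *m A i *m Q) *m D j) *m Q^T.
    by rewrite !mulmxA QQt mul1mx.
  by rewrite L Rr Dcomm.
- by move=> j; rewrite ffunE conj DD.
- by move=> j l jl; rewrite !ffunE conj Dorth // mulmx0 mul0mx.
- under eq_bigr do rewrite ffunE.
  by rewrite -mulmx_suml -mulmx_sumr Dsum mulmx1 QQt.
Qed.

End Fwd.

Section Bwd.
Variables (R : realType) (n m t : nat) (A : 'I_m -> 'M[R]_n).
Hypothesis symA : forall i, (A i)^T = A i.
Variables (eps : {ffun 'I_t -> 'M[R]_n}).
Hypotheses (Heps : is_ocsoi A eps) (symE : forall j, (eps j)^T = eps j).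
Variables (ns : 'I_t -> nat) (B : forall j, 'M[R]_(ns j, n)).
Hypotheses (BBT : forall j, B j *m (B j)^T = 1%:M) (BTB : forall j, (B j)^T *m B j = eps j).

Lemma ns_pos j : (0 < ns j)%N.
Proof.
case: Heps => nz _ _ _ _; rewrite lt0n; apply: contra (nz j) => /eqP e.
by rewrite -BTB; move: (B j); rewrite e => X; rewrite flatmx0 trmx0 mul0mx.
Qed.

Lemma ns_sum : (\sum_(j < t) ns j)%N = n.
Proof.
case: Heps => _ _ _ _ s1; apply/eqP; rewrite -(eqr_nat R) natr_sum.
have -> : \sum_(j < t) (ns j)%:R = \sum_(j < t) \tr (eps j) :> R.
  by apply: eq_bigr => j _; rewrite -BTB mxtrace_mulC BBT mxtrace1.
by rewrite -raddf_sum s1; apply/eqP; apply: mxtrace1.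
Qed.

Lemma BE j : B j *m eps j = B j.
Proof. by rewrite -BTB mulmxA BBT mul1mx. Qed.

Lemma B_cross (M : 'M[R]_n) j l : eps j *m M *m eps l = 0 ->
  B j *m M *m (B l)^T = 0.
Proof.
move=> H; rewrite -BE -[(B l)^T](trmxK) -(BE l) trmx_mul trmxK symE.
by rewrite !mulmxA -(mulmxA (B j)) -(mulmxA (B j)) H mulmx0 mul0mx.
Qed.


Let Hs := ns_sum.
Let Bc : 'M[R]_(\sum_(j < t) ns j, n) := \mxcol_j B j.
Let Q : 'M[R]_n := \matrix_(a, r) Bc (bcast Hs r) a.

Lemma Qconj (M : 'M[R]_n) r c :
  (Q^T *m M *m Q) r c = (Bc *m M *m Bc^T) (bcast Hs r) (bcast Hs c).
Proof.
rewrite !mxE; apply: eq_bigr => k _; rewrite !mxE; congr (_ * _).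
by apply: eq_bigr => a _; rewrite !mxE.
Qed.

Lemma Bc_entry (M : 'M[R]_n) s s' :
  (Bc *m M *m Bc^T) s s' =
  (B (tagnat.sig1 s) *m M *m (B (tagnat.sig1 s'))^T) (tagnat.sig2 s) (tagnat.sig2 s').
Proof.
rewrite !mxE; apply: eq_bigr => k _; rewrite !mxE; congr (_ * _).
by apply: eq_bigr => a _; rewrite !mxE.
Qed.


Lemma B_one i i' (k : 'I_(ns i)) (k' : 'I_(ns i')) :
  (B i *m 1%:M *m (B i')^T) k k' = ((i == i') && (k == k' :> nat))%:R.
Proof.
case: (eqVneq i i') => [e|ne].
  by subst i'; rewrite mulmx1 BBT !mxE.
case: Heps => _ _ _ orth _.
by rewrite B_cross ?mulmx1 ?orth // mxE.
Qed.

Lemma QTQ : Q^T *m Q = 1%:M.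
Proof.
apply/matrixP => r c; rewrite -[Q^T]mulmx1 Qconj Bc_entry B_one.
by rewrite -tagnat.eq_Rank !tagnat.sig2K !mxE.
Qed.

Lemma Qbd i : block_diag ns (Q^T *m A i *m Q).
Proof.
move=> r c; rewrite Qconj Bc_entry => nz; exists (blk Hs r); split.
  exact: in_block_blk.
have -> : blk Hs r = blk Hs c.
  apply/eqP; apply: contraNT nz => ne; rewrite B_cross ?mxE //.
  case: Heps => _ cen _ orth _.
  have EA : eps (blk Hs r) *m A i = A i *m eps (blk Hs r).
    by rewrite -[RHS](cen _ i) trmx_mul symE symA.
  by rewrite EA -mulmxA orth ?mulmx0.
exact: in_block_blk.
Qed.

End Bwd.

Local Open Scope ring_scope.

Theorem mainTheorem5 (R : realType) (n m t : nat) (A : 'I_m -> 'M[R]_n)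
  (symA : forall i, (A i)^T = A i) (t_ge1 : (1 <= t)%N) :
  ((* the map is well defined into the symmetric complete sets of idempotents *)
   (forall Vs : {ffun 'I_t -> {vspace 'cV[R]_n}}, is_oosbd A Vs ->
      is_ocsoi A (proj_tuple Vs) /\ (forall j, (proj_tuple Vs j)^T = proj_tuple Vs j))
   (* injective *)
   /\ (forall Vs Ws : {ffun 'I_t -> {vspace 'cV[R]_n}}, is_oosbd A Vs -> is_oosbd A Ws ->
      proj_tuple Vs = proj_tuple Ws -> Vs = Ws)
   (* surjective *)
   /\ (forall eps : {ffun 'I_t -> 'M[R]_n}, is_ocsoi A eps ->
      (forall j, (eps j)^T = eps j) ->
      exists Vs : {ffun 'I_t -> {vspace 'cV[R]_n}}, is_oosbd A Vs /\ proj_tuple Vs = eps))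
  /\
  ((exists (Q : 'M[R]_n) (ns : 'I_t -> nat),
      [/\ Q^T *m Q = 1%:M, (forall j, (0 < ns j)%N), (\sum_(j < t) ns j)%N = n
        & forall i, block_diag ns (Q^T *m A i *m Q)])
   <->
   (exists eps : {ffun 'I_t -> 'M[R]_n}, is_ocsoi A eps /\ (forall j, (eps j)^T = eps j))).
Proof.
split.
  split; first by move=> Vs HV; exact: (part1_wd symA HV).
  split; first by move=> Vs Ws _ _; exact: part1_inj.
  by move=> eps He hs; exact: (part1_surj symA He hs).
split.
  by case=> Q [ns [QQ nspos Hs bd]]; exact: (part2_fwd symA QQ nspos Hs bd).
case=> eps [He hs].
have H j : exists p : {r : nat & 'M[R]_(r, n)},
    tagged p *m (tagged p)^T = 1%:M /\ (tagged p)^T *m tagged p = eps j.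
  have [_ _ idem _ _] := He.
  have [r [B [B1 B2]]] := symidem_decomp (hs j) (idem j).
  by exists (Tagged (fun r => 'M[R]_(r, n)) B).
pose f j := proj1_sig (constructive_indefinite_description _ (H j)).
have fP j := proj2_sig (constructive_indefinite_description _ (H j)).
have BBT j : tagged (f j) *m (tagged (f j))^T = 1%:M by case: (fP j).
have BTB j : (tagged (f j))^T *m tagged (f j) = eps j by case: (fP j).
eexists; exists (fun j => tag (f j)); split.
- exact: (QTQ He hs BBT BTB).
- exact: (ns_pos He BTB).
- exact: (ns_sum He BBT BTB).
- by move=> i; exact: (@Qbd _ _ _ _ _ symA _ He hs _ _ BBT BTB i).
Qed.
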